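(* Let $M\in\mathbb{R}^{n\times n}$ be symmetric positive definite, $\delta_i,\delta_{i-1}>0$, $\epsilon\ge0$, and let $\bar P:\mathbb{R}^n\to\mathbb{R}$ (with the control value held fixed) be differentiable and $L$-weakly convex. For $\theta_i,\theta_{i-1},\theta_{i-2}\in\mathbb{R}^n$ let $$\bar E_i(\theta_i)=\frac{1}{2\delta_i^2}\Big\|\theta_i-\big(1+\tfrac{\delta_i}{\delta_{i-1}}\big)\theta_{i-1}+\tfrac{\delta_i}{\delta_{i-1}}\theta_{i-2}\Big\|_M^2+\bar P(\theta_i),$$ and suppose $\theta_i$ is an $\epsilon$-critical point, i.e. $2\Lambda_i\le\epsilon^2$ where $\Lambda_i=\frac12\|\nabla\bar E_i(\theta_i)\|^2$. Then $$\Big[\tfrac12\Big\|\tfrac{\theta_i-\theta_{i-1}}{\delta_i}\Big\|_M^2+\bar P(\theta_i)\Big]-\Big[\tfrac12\Big\|\tfrac{\theta_{i-1}-\theta_{i-2}}{\delta_{i-1}}\Big\|_M^2+\bar P(\theta_{i-1})\Big]\le\frac{L\delta_i^2+\delta_i}{2\sigma_{\min}(M)}\Big\|\frac{\theta_i-\theta_{i-1}}{\delta_i}\Big\|_M^2+\frac{\delta_i\epsilon^2}{2}.$$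
   Context: $\|x\|_M^2=x^TMx$; $\sigma_{\min}(M)$ is the smallest singular value of $M$. A function $\phi$ is $L$-weakly convex if $\phi(x)+\frac L2\|x\|^2$ is convex. The two bracketed quantities are the discrete Hamiltonians at frames $i$ and $i-1$, both evaluated with the same control value (the one used at frame $i$). *)

(* Defs.v *)
From HB Require Import structures.
From mathcomp Require Import all_boot all_order all_algebra.
From mathcomp Require Import all_classical all_reals all_analysis.
Set Implicit Arguments. Unset Strict Implicit. Unset Printing Implicit Defensive.
Import Order.TTheory GRing.Theory Num.Theory.
Import numFieldNormedType.Exports.
Local Open Scope ring_scope.
Local Open Scope classical_set_scope.

Section Defs.
Variables (R : realType) (n : nat).

(* ||x||_M^2 = x^T M x  (x written as a row vector, so x M x^T) *)
Definition sqnormM (M : 'M[R]_n) (x : 'rV[R]_n) : R := (x *m M *m x^T) 0 0.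

Definition sqnorm2 (x : 'rV[R]_n) : R := \sum_(j < n) x 0 j ^+ 2.

Definition sym_posdef (M : 'M[R]_n) : Prop :=
  M^T = M /\ forall x : 'rV[R]_n, x != 0 -> 0 < sqnormM M x.

Definition sigma_min (M : 'M[R]_n) : R :=
  Num.sqrt (inf [set a : R | eigenvalue (M^T *m M) a]).

Definition grad (f : 'rV[R]_n -> R) (x : 'rV[R]_n) : 'rV[R]_n :=
  \row_(j < n) 'D_(delta_mx 0 j) f x.

Definition convex_fun (f : 'rV[R]_n -> R) : Prop :=
  forall (x y : 'rV[R]_n) (t : R), 0 <= t <= 1 ->
    f (t *: x + (1 - t) *: y) <= t * f x + (1 - t) * f y.

Definition weakly_convex (L : R) (f : 'rV[R]_n -> R) : Prop :=
  convex_fun (fun x => f x + L / 2 * sqnorm2 x).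

End Defs.

(* Main.v *)
Require Import Defs.
From HB Require Import structures.
From mathcomp Require Import all_boot all_order all_algebra.
From mathcomp Require Import all_classical all_reals all_analysis.
From mathcomp Require Import ring lra.
Import Order.TTheory GRing.Theory Num.Theory.
Import numFieldNormedType.Exports.
Local Open Scope ring_scope.

Local Open Scope classical_set_scope.
Set Implicit Arguments. Unset Strict Implicit. Unset Printing Implicit Defensive.

Section Alg.
Variables (R : realType) (n : nat).
Implicit Types (x y z : 'rV[R]_n) (M : 'M[R]_n).

Definition dot x y : R := \sum_(j < n) x 0 j * y 0 j.

Lemma dotC x y : dot x y = dot y x.
Proof. by apply: eq_bigr => j _; rewrite mulrC. Qed.

Lemma dotDl x y z : dot (x + y) z = dot x z + dot y z.
Proof. by rewrite /dot -big_split; apply: eq_bigr => j _; rewrite !mxE mulrDl. Qed.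

Lemma dotZl (c : R) x y : dot (c *: x) y = c * dot x y.
Proof. by rewrite /dot mulr_sumr; apply: eq_bigr => j _; rewrite !mxE mulrA. Qed.

Lemma dotNl x y : dot (- x) y = - dot x y.
Proof. by rewrite -scaleN1r dotZl mulN1r. Qed.

Lemma dotDr x y z : dot z (x + y) = dot z x + dot z y.
Proof. by rewrite dotC dotDl !(dotC z). Qed.

Lemma dotZr (c : R) x y : dot y (c *: x) = c * dot y x.
Proof. by rewrite dotC dotZl dotC. Qed.

Lemma dotNr x y : dot y (- x) = - dot y x.
Proof. by rewrite dotC dotNl dotC. Qed.

Lemma dotBl x y z : dot (x - y) z = dot x z - dot y z.
Proof. by rewrite dotDl dotNl. Qed.
Lemma dotBr x y z : dot z (x - y) = dot z x - dot z y.
Proof. by rewrite dotDr dotNr. Qed.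

Lemma dot_ge0 x : 0 <= dot x x.
Proof. by apply: sumr_ge0 => j _; rewrite -expr2 sqr_ge0. Qed.

Lemma dot_eq0 x : dot x x = 0 -> x = 0.
Proof.
move=> /eqP; rewrite psumr_eq0 /=; last by move=> j _; rewrite -expr2 sqr_ge0.
idtac.
move=> /allP H.
apply/rowP => j; rewrite mxE; have := H j (mem_index_enum j).
by rewrite /= mulf_eq0 orbb => /eqP.
Qed.

Lemma sqnorm2E x : sqnorm2 x = dot x x.
Proof. by apply: eq_bigr => j _; rewrite expr2. Qed.

Lemma sqnormME M x : sqnormM M x = dot (x *m M) x.
Proof. by rewrite /sqnormM /dot mxE; apply: eq_bigr => j _; rewrite [x^T _ _]mxE. Qed.

Lemma dotM_sym M x y : M^T = M -> dot (x *m M) y = dot (y *m M) x.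
Proof.
move=> HM; rewrite /dot.
under eq_bigr do rewrite mxE big_distrl.
under [RHS]eq_bigr do rewrite mxE big_distrl.
rewrite exchange_big; apply: eq_bigr => i _; apply: eq_bigr => j _ /=.
have -> : M j i = M i j by rewrite -{1}HM mxE.
ring.
Qed.

Lemma dotMDl M x y z : dot ((x + y) *m M) z = dot (x *m M) z + dot (y *m M) z.
Proof. by rewrite mulmxDl dotDl. Qed.
Lemma dotMZl M c x z : dot ((c *: x) *m M) z = c * dot (x *m M) z.
Proof. by rewrite -scalemxAl dotZl. Qed.
Lemma dotMNl M x z : dot ((- x) *m M) z = - dot (x *m M) z.
Proof. by rewrite mulNmx dotNl. Qed.

Lemma quadE M x z (t : R) : M^T = M ->
  dot ((x + t *: z) *m M) (x + t *: z) =
  dot (x *m M) x + 2 * t * dot (x *m M) z + t ^+ 2 * dot (z *m M) z.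
Proof.
move=> HM; rewrite !(dotMDl, dotMZl, dotDr, dotZr) (dotM_sym z x HM); ring.
Qed.

Lemma dotE x z (t : R) :
  dot (x + t *: z) (x + t *: z) = dot x x + 2 * t * dot x z + t ^+ 2 * dot z z.
Proof. rewrite !(dotDl, dotZl, dotDr, dotZr) (dotC z x); ring. Qed.

End Alg.

Section Spec.
Variables (R : realType).

Lemma cont_sum (T : topologicalType) m (F : 'I_m -> T -> R) :
  (forall j, continuous (F j)) -> continuous (fun x => \sum_(j < m) F j x).
Proof.
elim: m F => [|m IH] F HF.
  have -> : (fun x => \sum_(j < 0) F j x) = cst 0 by apply/funext => y; rewrite big_ord0.
  exact: cst_continuous.
have -> : (fun x => \sum_(j < m.+1) F j x) =
   (fun x => \sum_(j < m) F (widen_ord (leqnSn m) j) x) + F ord_max.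
  by apply/funext => y; rewrite big_ord_recr.
move=> x; apply: continuousD; last exact: HF.
by apply: IH => j; exact: HF.
Qed.

Lemma cont_coord m (j : 'I_m) : continuous (fun x : 'rV[R]_m => x 0 j).
Proof. exact: (@coord_continuous R 1 m 0 j). Qed.

Lemma cont_quad m (M : 'M[R]_m) : continuous (fun x : 'rV[R]_m => dot (x *m M) x).
Proof.
apply: cont_sum => j x; apply: continuousM; last exact: cont_coord.
have -> : (fun x : 'rV[R]_m => (x *m M) 0 j) = (fun x => \sum_(i < m) x 0 i * M i j).
  by apply/funext => y; rewrite mxE.
apply: cont_sum => i y; apply: continuousM; first exact: cont_coord.
exact: cst_continuous.
Qed.

Lemma cont_dot m : continuous (fun x : 'rV[R]_m => dot x x).
Proof.
have -> : (fun x : 'rV[R]_m => dot x x) = (fun x => dot (x *m 1%:M) x).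
  by apply/funext => y; rewrite mulmx1.
exact: cont_quad.
Qed.


Lemma minimizer k (M : 'M[R]_k.+1) :
  exists2 x0 : 'rV[R]_k.+1, dot x0 x0 = 1 &
    forall y, dot y y = 1 -> dot (x0 *m M) x0 <= dot (y *m M) y.
Proof.
pose A := [set x : 'rV[R]_k.+1 | dot x x = 1].
have A0 : A !=set0.
  exists (delta_mx ord0 ord0 : 'rV[R]_k.+1); rewrite /A /= /dot (bigD1 0) //= big1 => [|j /negbTE jn0].
    by rewrite !mxE eqxx mulr1 addr0.
  by rewrite !mxE jn0 /= mul0r.
have cA : compact A.
  apply: (@subclosed_compact _ A
    [set v : 'rV[R]_k.+1 | forall i, `[-1, 1]%classic (v ord0 i)]).
  - have -> : A = (fun x : 'rV[R]_k.+1 => dot x x) @^-1` [set 1] by [].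
    apply: preimage_closed; last exact: closed_eq.
    by move=> x _; exact: cont_dot.
  - exact: (@rV_compact R k.+1 (fun=> `[-1, 1]%classic) (fun=> @segment_compact _ _ _)).
  - move=> v /= Hv i; rewrite /= in_itv /= -ler_norml.
    rewrite -(@ler_pXn2r _ 2) ?nnegrE // ?normr_ge0 // real_normK ?num_real // expr1n.
    rewrite -Hv /dot (bigD1 i) //= -expr2 lerDl.
    by apply: sumr_ge0 => j _; rewrite -expr2 sqr_ge0.
have [x0 Hx0 Hmin] := EVT_min_rV A0 cA (continuous_subspaceT (cont_quad (M:=M))).
exists x0; first by move: Hx0; rewrite inE.
by move=> y Hy; apply: Hmin; rewrite inE.
Qed.


Lemma dot0 m (y : 'rV[R]_m) : dot 0 y = 0.
Proof. by rewrite -(scale0r 0) dotZl mul0r. Qed.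

Lemma spec n (M : 'M[R]_n) : sym_posdef M ->
  forall x : 'rV[R]_n, sqnorm2 x <= (sigma_min M)^-1 * sqnormM M x.
Proof.
case: n M => [|k] M [HM Hpd] x.
  by rewrite /sqnorm2 /sqnormM big_ord0 mxE big_ord0 mulr0.
rewrite sqnorm2E sqnormME.
have [x0 Hx0 Hmin] := minimizer M.
set mu := dot (x0 *m M) x0.
have x0n0 : x0 != 0.
  by apply/eqP => Hx; move: Hx0; rewrite Hx dot0 => /eqP; rewrite eq_sym oner_eq0.
have mu_gt0 : 0 < mu by have := Hpd _ x0n0; rewrite sqnormME.
have Hray : forall y, mu * dot y y <= dot (y *m M) y.
  move=> y; have [/dot_eq0 ->|yn0] := eqVneq (dot y y) 0.
    by rewrite mul0mx !dot0 mulr0.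
  have sgt0 : 0 < dot y y by rewrite lt_neqAle eq_sym yn0 dot_ge0.
  pose c := (Num.sqrt (dot y y))^-1.
  have c2 : c ^+ 2 = (dot y y)^-1 by rewrite /c exprVn sqr_sqrtr // ltW.
  have := Hmin (c *: y); rewrite dotMZl dotZr dotZl dotZr !mulrA -expr2 c2.
  rewrite mulVf ?yn0 // => /(_ erefl) H.
  by rewrite -(@ler_pM2l _ (dot y y)^-1) ?invr_gt0 // mulrCA mulVf // mulr1.
have Hsym : forall u v : 'rV[R]_k.+1, dot (u *m M) v = dot (v *m M) u.
  by move=> u v; apply: dotM_sym.
pose w := x0 *m M; pose z := w - mu *: x0.
have z0 : z = 0.
  pose Z := dot z z; pose Q := dot (z *m M) z - mu * dot z z.
  have Zge0 : 0 <= Z by exact: dot_ge0.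
  have Qge0 : 0 <= Q by rewrite /Q subr_ge0.
  pose t := - Z / (Q + 1).
  have ht : t * (Q + 1) = - Z by rewrite /t mulrVK // unitfE; apply/lt0r_neq0; lra.
  have := Hray (x0 + t *: z).
  rewrite (quadE _ _ _ HM) dotE Hx0 -/mu.
  have Hw : dot (x0 *m M) z - mu * dot x0 z = Z.
    by rewrite /Z {3}/z dotBl dotZl.
  move=> H.
  have H2 : 0 <= 2 * t * Z + t ^+ 2 * Q.
    rewrite -Hw /Q; move: H; rewrite -/w; lra.
  apply: dot_eq0; rewrite -/Z; nra.
have Hw : w = mu *: x0 by apply/eqP; rewrite -subr_eq0 -/z z0.
have Heig : eigenvalue (M^T *m M) (mu ^+ 2).
  apply/eigenvalueP; exists x0 => //.
  have Hw2 : x0 *m M = mu *: x0 := Hw.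
  by rewrite HM mulmxA Hw2 -scalemxAl Hw2 scalerA expr2.
have Hlb : forall s, eigenvalue (M^T *m M) s -> mu ^+ 2 <= s.
  move=> s /eigenvalueP [v Hv vn0].
  pose W := v *m M.
  have HW : dot W W = s * dot v v.
    by rewrite -Hsym /W -mulmxA -{1}HM Hv dotZl.
  have Hpos : 0 < dot v v.
    rewrite lt_neqAle dot_ge0 andbT eq_sym; apply/eqP => /dot_eq0 H0.
    by rewrite H0 eqxx in vn0.
  have H1 := dot_ge0 (W - mu *: v).
  rewrite !(dotBl, dotBr, dotZl, dotZr) (dotC v W) HW in H1.
  have H3 := Hray v.
  rewrite -/W in H3.
  nra.
have Hinf : inf [set a : R | eigenvalue (M^T *m M) a] = mu ^+ 2.
  apply/eqP; rewrite eq_le; apply/andP; split.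
    apply: ge_inf => //; exists 0 => s /Hlb; apply: le_trans; exact: sqr_ge0.
  by apply: lb_le_inf; [exists (mu ^+ 2) | move=> s /Hlb].
have -> : sigma_min M = mu by rewrite /sigma_min Hinf sqrtr_sqr ger0_norm // ltW.
rewrite -(@ler_pM2l _ mu) // mulrA mulfV ?mul1r ?Hray //; exact: lt0r_neq0.
Qed.

End Spec.

Section Der.
Variables (R : realType) (n : nat).

Lemma quad_cvg (M : 'M[R]_n) (HM : M^T = M) (c v : 'rV[R]_n) :
  (fun h : R => h^-1 *: (dot ((h *: v + c) *m M) (h *: v + c) - dot (c *m M) c))
    @ 0^' --> 2 * dot (c *m M) v.
Proof.
pose g := fun h : R => 2 * dot (c *m M) v + h * dot (v *m M) v.
have -> : 2 * dot (c *m M) v = g 0 by rewrite /g mul0r addr0.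
apply: cvg_trans (@near_eq_cvg _ _ _ _ g _ _) _.
  near=> h.
  have hn0 : h != 0 by near: h; exact: nbhs_dnbhs_neq.
  rewrite [h *: v + c]addrC (quadE _ _ _ HM) /g.
  have -> : forall a : R, h^-1 *: a = h^-1 * a by [].
  by field.
apply: cvg_within_filter.
have : {for 0, continuous g}.
  apply: continuousD; first exact: cst_continuous.
  apply: continuousM; first exact: cvg_id.
  exact: cst_continuous.
by [].
Unshelve. all: by end_near.
Qed.


Lemma dot_delta (y : 'rV[R]_n) (j : 'I_n) : dot y (delta_mx 0 j) = y 0 j.
Proof.
rewrite /dot (bigD1 j) //= big1 => [|i /negbTE ij]; first by rewrite !mxE !eqxx mulr1 addr0.
by rewrite !mxE ij andbF mulr0.
Qed.

Lemma dP_sum (P : 'rV[R]_n -> R) (x a : 'rV[R]_n) : differentiable P x ->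
  \sum_(j < n) a 0 j * 'D_(delta_mx 0 j) P x = 'D_a P x.
Proof.
move=> dP; rewrite (deriveE _ dP) {2}(row_sum_delta a) linear_sum.
by apply: eq_bigr => j _; rewrite (deriveE _ dP) linearZ.
Qed.

Lemma young (d x y : R) : 0 < d -> x * y <= d / 2 * y ^+ 2 + 1 / (2 * d) * x ^+ 2.
Proof.
move=> d0; have := sqr_ge0 (d * y - x) => H.
have X0 : 0 < 1 / (2 * d) by rewrite divr_gt0 // mulr_gt0.
have HX : 1 / (2 * d) * d = 1 / 2 by field; apply/lt0r_neq0.
have := mulr_ge0 (ltW X0) H.
have -> : d / 2 = (1 / (2 * d) * d) * d by rewrite HX; ring.
nra.
Qed.

End Der.
Theorem lemma12 (R : realType) (n : nat) (M : 'M[R]_n)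
  (P : 'rV[R]_n -> R) (L eps di dim1 : R)
  (thi thim1 thim2 : 'rV[R]_n) :
  sym_posdef M -> 0 < di -> 0 < dim1 -> 0 <= eps -> 0 <= L ->
  (forall x, differentiable P x) -> weakly_convex L P ->
  let E := fun th : 'rV[R]_n =>
    1 / (2 * di ^+ 2) *
      sqnormM M (th - (1 + di / dim1) *: thim1 + (di / dim1) *: thim2)
    + P th in
  let Lambda := 1 / 2 * sqnorm2 (grad E thi) in
  2 * Lambda <= eps ^+ 2 ->
  (1 / 2 * sqnormM M (di^-1 *: (thi - thim1)) + P thi)
  - (1 / 2 * sqnormM M (dim1^-1 *: (thim1 - thim2)) + P thim1)
  <= (L * di ^+ 2 + di) / (2 * sigma_min M) * sqnormM M (di^-1 *: (thi - thim1))
     + di * eps ^+ 2 / 2.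
Proof.
move=> HMpd di0 dim10 eps0 L0 Pdiff Pwc E Lambda Hcrit.
have HM := HMpd.1.
have Hspec := spec HMpd.
pose a := thi - thim1; pose b := thim1 - thim2; pose r := di / dim1.
pose c := thi - (1 + r) *: thim1 + r *: thim2.
pose k := 1 / (2 * di ^+ 2).
have ceq : c = a + (- r) *: b by apply/rowP => j; rewrite !mxE; ring.
have Hgrad : forall j, grad E thi 0 j =
    k * (2 * dot (c *m M) (delta_mx 0 j)) + 'D_(delta_mx 0 j) P thi.
  move=> j; rewrite mxE; apply: cvg_lim => //.
  set v := delta_mx 0 j.
  have -> : (fun h : R => h^-1 *: ((E \o shift thi) (h *: v) - E thi)) =
      (fun h => k * (h^-1 *: (dot ((h *: v + c) *m M) (h *: v + c) - dot (c *m M) c)))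
      + (fun h => h^-1 *: ((P \o shift thi) (h *: v) - P thi)).
    apply/funext => h /=; rewrite /E !sqnormME.
    have -> : h *: v + thi - (1 + di / dim1) *: thim1 + (di / dim1) *: thim2 = h *: v + c.
      by rewrite /c /r !addrA.
    have -> : thi - (1 + di / dim1) *: thim1 + (di / dim1) *: thim2 = c by [].
    have sE : forall x y : R, x *: y = x * y by []. rewrite !fctE /= !sE /k; ring.
  have HP : (fun h : R => h^-1 *: ((P \o shift thi) (h *: v) - P thi)) @ 0^' --> 'D_v P thi.
    exact: (diff_derivable (v:=v) (Pdiff thi)).
  apply: cvgD; last exact: HP.
  by apply: cvgMl_tmp; apply: quad_cvg.
have sE : forall x y : R, x *: y = x * y by [].
pose g := grad E thi.
have HG : \sum_(j < n) a 0 j * g 0 j = 2 * k * dot (c *m M) a + 'D_a P thi.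
  rewrite (eq_bigr (fun j => 2 * k * ((c *m M) 0 j * a 0 j) + a 0 j * 'D_(delta_mx 0 j) P thi)); last first.
    by move=> j _; rewrite /g Hgrad dot_delta; ring.
  by rewrite big_split /= -mulr_sumr (dP_sum a (Pdiff thi)).
have HY : \sum_(j < n) a 0 j * g 0 j <= di / 2 * sqnorm2 g + 1 / (2 * di) * dot a a.
  rewrite /sqnorm2 /dot !mulr_sumr -big_split; apply: ler_sum => j _ /=.
  by rewrite -(expr2 (a 0 j)); exact: young.
have He : sqnorm2 g <= eps ^+ 2 by move: Hcrit; rewrite /Lambda -/g; lra.
pose F := fun x => P x + L / 2 * sqnorm2 x.
have HF : (fun h : R => h^-1 *: ((F \o shift thi) (h *: (- a)) - F thi)) @ 0^' -->
    'D_(- a) P thi + L / 2 * (2 * dot (thi *m 1%:M) (- a)).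
  have -> : (fun h : R => h^-1 *: ((F \o shift thi) (h *: (- a)) - F thi)) =
     (fun h : R => h^-1 *: ((P \o shift thi) (h *: (- a)) - P thi)) +
     (fun h : R => L / 2 * (h^-1 *: (dot ((h *: (- a) + thi) *m 1%:M) (h *: (- a) + thi)
         - dot (thi *m 1%:M) thi))).
    apply/funext => h; rewrite !fctE /= !sE /F !sqnorm2E !mulmx1; ring.
  apply: cvgD; first exact: (diff_derivable (v:=- a) (Pdiff thi)).
  by apply: cvgMl_tmp; apply: quad_cvg; rewrite trmx1.
have HFr : (fun h : R => h^-1 *: ((F \o shift thi) (h *: (- a)) - F thi)) @ 0^'+ -->
    'D_(- a) P thi + L / 2 * (2 * dot (thi *m 1%:M) (- a)).
  apply: cvg_trans HF; apply: cvg_fmap2; apply: within_subset => x /=.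
  exact: lt0r_neq0.
have Hconv : 'D_(- a) P thi + L / 2 * (2 * dot (thi *m 1%:M) (- a)) <= F thim1 - F thi.
  apply: (cvgr_to_le HFr); near=> h.
  have h0 : 0 < h by near: h; exact: nbhs_right_gt.
  have h1 : h <= 1 by near: h; apply: nbhs_right_le; exact: ltr01.
  have := Pwc thim1 thi h; rewrite ltW // h1 => /(_ isT).
  have -> : h *: thim1 + (1 - h) *: thi = h *: (- a) + thi.
    by apply/rowP => j; rewrite !mxE; ring.
  rewrite -/F => H; rewrite /= sE -(ler_pM2l h0) mulrA mulfV ?mul1r; last exact: lt0r_neq0.
  move: H; rewrite /F; lra.
have HDn : 'D_(- a) P thi = - 'D_a P thi by rewrite !deriveE // linearN.
have Hthim1 : thim1 = thi + (-1) *: a by apply/rowP => j; rewrite !mxE; ring.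
have Hd1 : dot thim1 thim1 = dot thi thi - 2 * dot thi a + dot a a.
  by rewrite {1 2}Hthim1 dotE; ring.
rewrite HDn mulmx1 dotNr /F !sqnorm2E Hd1 in Hconv.
pose A := dot (a *m M) a; pose B := dot (b *m M) b; pose C := dot (a *m M) b.
pose S := dot a a; pose D := 'D_a P thi; pose G := \sum_(j < n) a 0 j * g 0 j.
pose u := di^-1; pose w := dim1^-1; pose rho := (sigma_min M)^-1.
have HK1 : sqnormM M (di^-1 *: (thi - thim1)) = u ^+ 2 * A.
  by rewrite sqnormME -/a dotMZl dotZr mulrA -expr2.
have HK2 : sqnormM M (dim1^-1 *: (thim1 - thim2)) = w ^+ 2 * B.
  by rewrite sqnormME -/b dotMZl dotZr mulrA -expr2.
have HcA : dot (c *m M) a = A - r * C.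
  by rewrite ceq dotMDl dotMZl (dotM_sym b a HM); rewrite /A /C; ring.
have Hpsd : 0 <= A - 2 * r * C + r ^+ 2 * B.
  have -> : A - 2 * r * C + r ^+ 2 * B = dot (c *m M) c.
    by rewrite ceq quadE //; rewrite /A /B /C; ring.
  have [->|cn0] := eqVneq c 0; first by rewrite mul0mx dot0.
  by have := HMpd.2 _ cn0; rewrite sqnormME => /ltW.
have Hsig : S <= rho * A by have := Hspec a; rewrite sqnorm2E sqnormME.
have S0 : 0 <= S := dot_ge0 a.
have udi : u * di = 1 by rewrite mulVf //; exact: lt0r_neq0.
have wdim1 : w * dim1 = 1 by rewrite mulVf //; exact: lt0r_neq0.
have hk : k = u ^+ 2 / 2 by rewrite /k /u; field; exact: lt0r_neq0.
have hr : r = di * w by [].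
have hw2 : w ^+ 2 = u ^+ 2 * r ^+ 2.
  by rewrite hr exprMn mulrA -exprMn udi expr1n mul1r.
have h2d : 1 / (2 * di) = u / 2 by rewrite /u; field; exact: lt0r_neq0.
have hR : (L * di ^+ 2 + di) / (2 * sigma_min M) * (u ^+ 2 * A) = (L + u) / 2 * (rho * A).
  rewrite /rho /u; have [->|sn0] := eqVneq (sigma_min M) 0.
    by rewrite mulr0 !invr0 !(mulr0, mul0r).
  by field; apply/andP; split => //; exact: lt0r_neq0.
rewrite HK1 HK2 hR.
have HG' : G = k * 2 * (A - r * C) + D by rewrite /G HG HcA /D; ring.
rewrite h2d -/G -/S in HY.
have Hpsd2 := mulr_ge0 (sqr_ge0 u) Hpsd.
have u0 : 0 < u by rewrite invr_gt0.
have Hrho := ler_wpM2l (_ : 0 <= (L + u) / 2) Hsig.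
have Hrho' := Hrho (divr_ge0 (addr_ge0 L0 (ltW u0)) (ler0n _ 2)).
have He2 := ler_wpM2l (divr_ge0 (ltW di0) (ler0n _ 2)) He.
rewrite -/D -/S in Hconv.
rewrite hk in HG'; rewrite hw2.
lra.
Unshelve. all: by end_near.
Qed.
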